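(* If $A$ is a uniform Kan complex, then the canonical map $p:A^{\mathrm{I}}\to A\times A$ admits the structure of a uniform Kan fibration.
   Context: Let $\mathbb{B}$ be the category of finite sets $[n]=\{\bot,x_1,\dots,x_n,\top\}$ ($n\ge0$, $\bot\ne\top$) and functions preserving $\bot,\top$; cartesian cubical sets are presheaves on $\mathbb{B}^{op}$. $\mathrm{I}^n$ is the representable on $[n]$, $\mathrm{I}^n\cong\mathrm{I}\times\dots\times\mathrm{I}$, $\mathrm{I}=\mathrm{I}^1$; the two maps $[1]\to[0]$ give endpoints $0,1:1\to\mathrm{I}$, and $p:A^{\mathrm{I}}\to A^{\partial\mathrm{I}}\cong A\times A$ is induced by the copairing $\partial\mathrm{I}=1+1\to\mathrm{I}$. For $1\le i\le n$, $d\in\{0,1\}$, the face $\alpha_i^d:\mathrm{I}^{n-1}\to\mathrm{I}^n$ inserts $d$ in coordinate $i$; for $e\in\{0,1\}$ the open box $\sqcup^n_e\rightarrowtail\mathrm{I}^n$ is the union of the images of all faces $\alpha_i^d$ with $(i,d)\ne(1,e)$, with inclusion $i^n_e$. A uniform Kan fibration structure on $f:Y\to X$ consists of, for each $n\ge1$, $e\in\{0,1\}$, $k\ge1$ and each commutative square $b:\mathrm{I}^k\times\sqcup^n_e\to Y$, $a:\mathrm{I}^k\times\mathrm{I}^n\to X$ with $fb=a(1\times i^n_e)$, a chosen filler $\phi(a,b):\mathrm{I}^k\times\mathrm{I}^n\to Y$ with $\phi(a,b)(1\times i^n_e)=b$ and $f\phi(a,b)=a$, such that $\phi(a,b)\circ(\alpha\times1)=\phi(a(\alpha\times1),b(\alpha\times1))$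 for all $\alpha:\mathrm{I}^j\to\mathrm{I}^k$ ($j\ge1$). A uniform Kan complex is a cubical set $A$ with a uniform Kan fibration structure on $A\to1$. *)

(* Defs.v *)
(* cartesian cubical sets as presheaves on B^op,
   i.e. covariant functors B -> Type, where B is the category of bipointed
   finite sets [n] = {bot, x_1..x_n, top}. *)
From Stdlib Require Import FunctionalExtensionality ProofIrrelevance.
From mathcomp Require Import all_boot.

Set Implicit Arguments.
Unset Strict Implicit.
Unset Printing Implicit Defensive.

(* Points of [n]: inl false = bot, inl true = top, inr i = x_(i+1). *)
Definition bpt (n : nat) : finType := (bool + 'I_n)%type.

(* A morphism [m] -> [n] preserving bot and top is determined by the images
   of x_1..x_m. *)
Definition Bmor (m n : nat) : finType := {ffun 'I_m -> bpt n}.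

Definition bext m n (f : Bmor m n) (x : bpt m) : bpt n :=
  match x with inl b => inl b | inr i => f i end.

Definition Bid (n : nat) : Bmor n n := [ffun i => inr i].

Definition Bcomp m n p (g : Bmor n p) (f : Bmor m n) : Bmor m p :=
  [ffun i => bext g (f i)].

Lemma Bcomp_id_l m n (f : Bmor m n) : Bcomp (Bid n) f = f.
Proof. by apply/ffunP=> i; rewrite !ffunE; case: (f i) => //= j; rewrite ffunE. Qed.

Lemma Bcomp_id_r m n (f : Bmor m n) : Bcomp f (Bid m) = f.
Proof. by apply/ffunP=> i; rewrite !ffunE. Qed.

Lemma Bcomp_assoc m n p q (h : Bmor p q) (g : Bmor n p) (f : Bmor m n) :
  Bcomp h (Bcomp g f) = Bcomp (Bcomp h g) f.
Proof.
apply/ffunP=> i; rewrite !ffunE; case: (f i) => //= j; by rewrite !ffunE.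
Qed.

Record cset := CSet {
  cobj :> nat -> Type;
  cact : forall m n, Bmor m n -> cobj m -> cobj n;
  cact_id : forall n (x : cobj n), cact (Bid n) x = x;
  cact_comp : forall m n p (g : Bmor n p) (f : Bmor m n) (x : cobj m),
      cact (Bcomp g f) x = cact g (cact f x)
}.
Arguments cact {c m n}.

Record hom (X Y : cset) := Hom {
  happ :> forall n, X n -> Y n;
  hnat : forall m n (f : Bmor m n) (x : X m),
      happ (cact f x) = cact f (happ x)
}.
Arguments happ {X Y} h n x.

Definition heq (X Y : cset) (F G : hom X Y) : Prop :=
  forall n (x : X n), happ F n x = happ G n x.

Lemma hom_ext (X Y : cset) (F G : hom X Y) : heq F G -> F = G.
Proof.
case: F G => [F HF] [G HG] /= H.
have E : F = G.
  by apply: functional_extensionality_dep => n;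
     apply: functional_extensionality => x; apply: H.
subst G; f_equal; apply: proof_irrelevance.
Qed.

Definition hcomp (X Y Z : cset) (G : hom Y Z) (F : hom X Y) : hom X Z.
Proof.
refine (@Hom X Z (fun n x => happ G n (happ F n x)) _).
by move=> m n f x; rewrite !hnat.
Defined.

Definition hid (X : cset) : hom X X.
Proof. by refine (@Hom X X (fun n x => x) _). Defined.

(* representable I^n = Hom_B([n], -) *)
Definition yon (n : nat) : cset.
Proof.
refine (@CSet (fun m => Bmor n m) (fun m m' f c => Bcomp f c) _ _).
- by move=> m c; apply: Bcomp_id_l.
- by move=> m m' p g f c; rewrite Bcomp_assoc.
Defined.

Definition one : cset.
Proof. by refine (@CSet (fun _ => unit) (fun _ _ _ x => x) _ _). Defined.

Definition to_one (X : cset) : hom X one.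
Proof. by refine (@Hom X one (fun _ _ => tt) _). Defined.

Definition cprod (X Y : cset) : cset.
Proof.
refine (@CSet (fun m => (X m * Y m)%type)
          (fun m n f xy => (cact f xy.1, cact f xy.2)) _ _).
- by move=> n [x y] /=; rewrite !cact_id.
- by move=> m n p g f [x y] /=; rewrite !cact_comp.
Defined.

Definition hpair (Z X Y : cset) (F : hom Z X) (G : hom Z Y) : hom Z (cprod X Y).
Proof.
refine (@Hom Z (cprod X Y) (fun n z => (happ F n z, happ G n z)) _).
by move=> m n f z /=; rewrite !hnat.
Defined.

Definition hfst (X Y : cset) : hom (cprod X Y) X.
Proof. by refine (@Hom (cprod X Y) X (fun n xy => xy.1) _). Defined.

Definition hsnd (X Y : cset) : hom (cprod X Y) Y.
Proof. by refine (@Hom (cprod X Y) Y (fun n xy => xy.2) _). Defined.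

Definition hprodmap (X X' Y Y' : cset) (F : hom X X') (G : hom Y Y') :
  hom (cprod X Y) (cprod X' Y') :=
  hpair (hcomp F (@hfst X Y)) (hcomp G (@hsnd X Y)).

(* the interval I = I^1 and its endpoints 0,1 : 1 -> I, given by the two
   maps [1] -> [0] (x_1 |-> bot, resp. x_1 |-> top). *)
Definition cI : cset := yon 1.

Definition endpt (d : bool) : hom one cI.
Proof.
refine (@Hom one cI (fun n _ => [ffun _ => inl d]) _).
by move=> m n f x; apply/ffunP=> i; rewrite !ffunE.
Defined.

Definition yonmap m m' (f : Bmor m m') : hom (yon m') (yon m).
Proof.
refine (@Hom (yon m') (yon m) (fun p c => Bcomp c f) _).
by move=> p q g c /=; rewrite Bcomp_assoc.
Defined.

Definition cexp (E X : cset) : cset.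
Proof.
refine (@CSet (fun m => hom (cprod (yon m) E) X)
          (fun m m' f phi => hcomp phi (hprodmap (yonmap f) (hid E))) _ _).
- move=> n phi; apply: hom_ext => p [c x] /=; by rewrite Bcomp_id_r.
- move=> m n p g f phi; apply: hom_ext => q [c x] /=; by rewrite Bcomp_assoc.
Defined.

Definition cexp_pre (E E' X : cset) (u : hom E' E) : hom (cexp E X) (cexp E' X).
Proof.
refine (@Hom (cexp E X) (cexp E' X)
          (fun m phi => hcomp phi (hprodmap (hid (yon m)) u)) _).
by move=> m n f phi; apply: hom_ext => p [c x].
Defined.

(* the canonical isomorphism X^1 ~= X (Yoneda): phi |-> phi_n(id_[n], tt) *)
Definition eval_one (X : cset) : hom (cexp one X) X.
Proof.
refine (@Hom (cexp one X) X (fun n phi => happ phi n (Bid n, tt)) _).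
move=> m n f phi /=.
rewrite -(hnat phi) /=; by rewrite Bcomp_id_l Bcomp_id_r.
Defined.

(* p : A^I -> A^{dI} ~= A x A, induced by the copairing dI = 1 + 1 -> I of
   the endpoints 0 and 1. *)
Definition path_ends (A : cset) : hom (cexp cI A) (cprod A A) :=
  hpair (hcomp (eval_one A) (cexp_pre A (endpt false)))
        (hcomp (eval_one A) (cexp_pre A (endpt true))).

(* The face alpha_i^d : I^n -> I^(n+1) (inserting d in coordinate i,
   0-indexed here) corresponds by Yoneda to the B-map [n+1] -> [n]
   sending x_i to d and the other x_j to the remaining coordinates in order. *)
Definition sface n (i : 'I_n.+1) (d : bool) : Bmor n.+1 n :=
  [ffun j => if unlift i j is Some j' then inr j' else inl d].

Definition face n (i : 'I_n.+1) (d : bool) : hom (yon n) (yon n.+1) :=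
  yonmap (sface i d).

(* c in I^(n+1)(m) lies in the open box sqcup^(n+1)_e iff it is in the image
   of some face alpha_i^d with (i,d) <> (first coordinate, e). *)
Definition in_obox n (e : bool) m (c : Bmor n.+1 m) : bool :=
  [exists i : 'I_n.+1, exists d : bool,
     ((i, d) != (ord0, e)) && [exists c' : Bmor n m, c == happ (face i d) m c']].

Lemma in_obox_act n e m m' (f : Bmor m m') (c : Bmor n.+1 m) :
  in_obox e c -> in_obox e (Bcomp f c).
Proof.
case/existsP=> i /existsP [d /andP [Hid /existsP [c' /eqP Hc]]].
apply/existsP; exists i; apply/existsP; exists d; rewrite Hid /=.
apply/existsP; exists (Bcomp f c'); apply/eqP => /=.
by rewrite Hc /= Bcomp_assoc.
Qed.

Definition obox (n : nat) (e : bool) : cset.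
Proof.
refine (@CSet (fun m => {c : Bmor n.+1 m | in_obox e c})
          (fun m m' f c => exist _ (Bcomp f (sval c)) (in_obox_act f (svalP c)))
          _ _).
- by move=> m [c Hc]; apply: val_inj; rewrite /= Bcomp_id_l.
- by move=> m m' p g f [c Hc]; apply: val_inj; rewrite /= Bcomp_assoc.
Defined.

Definition obox_incl (n : nat) (e : bool) : hom (obox n e) (yon n.+1).
Proof. by refine (@Hom (obox n e) (yon n.+1) (fun m c => sval c) _). Defined.

Definition kan_square (Y X : cset) (f : hom Y X) (n : nat) (e : bool) (k : nat)
  (a : hom (cprod (yon k.+1) (yon n.+1)) X)
  (b : hom (cprod (yon k.+1) (obox n e)) Y) : Prop :=
  heq (hcomp f b) (hcomp a (hprodmap (hid (yon k.+1)) (obox_incl n e))).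

(* A uniform Kan fibration structure on f : Y -> X (dimensions n, k, j of the
   paper are written n.+1, k.+1, j.+1 to encode n, k, j >= 1). *)
Record ukf_struct (Y X : cset) (f : hom Y X) := UKF {
  kfill : forall n e k a b, @kan_square Y X f n e k a b ->
            hom (cprod (yon k.+1) (yon n.+1)) Y;
  kfill_box : forall n e k a b (H : @kan_square Y X f n e k a b),
      heq (hcomp (kfill H) (hprodmap (hid (yon k.+1)) (obox_incl n e))) b;
  kfill_lift : forall n e k a b (H : @kan_square Y X f n e k a b),
      heq (hcomp f (kfill H)) a;
  kfill_unif : forall n e k j (alpha : hom (yon j.+1) (yon k.+1)) a b
      (H : @kan_square Y X f n e k a b)
      (H' : @kan_square Y X f n e j
              (hcomp a (hprodmap alpha (hid (yon n.+1))))
              (hcomp b (hprodmap alpha (hid (obox n e))))),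
      heq (hcomp (kfill H) (hprodmap alpha (hid (yon n.+1)))) (kfill H')
}.

Definition ukan_complex (A : cset) : Type := ukf_struct (to_one A).

(* Main.v *)
From Stdlib Require Import FunctionalExtensionality ProofIrrelevance.
Require Import Defs.
From mathcomp Require Import all_boot.
Set Implicit Arguments.
Unset Strict Implicit.
Unset Printing Implicit Defensive.

Definition dinit n m (d : Bmor n.+1 m) : Bmor n m := [ffun j => d (lift ord_max j)].
Definition dlast n m (d : Bmor n.+1 m) : bpt m := d ord_max.
Definition dsnoc n m (d : Bmor n m) (t : bpt m) : Bmor n.+1 m :=
  [ffun i => if unlift ord_max i is Some j then d j else t].

Lemma dinit_snoc n m (d : Bmor n m) t : dinit (dsnoc d t) = d.
Proof. by apply/ffunP=> j; rewrite !ffunE liftK. Qed.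
Lemma dlast_snoc n m (d : Bmor n m) t : dlast (dsnoc d t) = t.
Proof. by rewrite /dlast ffunE unlift_none. Qed.
Lemma dsnoc_eta n m (d : Bmor n.+1 m) : dsnoc (dinit d) (dlast d) = d.
Proof. by apply/ffunP=> i; rewrite !ffunE; case: unliftP => [j ->|->]; rewrite ?ffunE. Qed.
Lemma dinit_comp n m p (f : Bmor m p) (d : Bmor n.+1 m) : dinit (Bcomp f d) = Bcomp f (dinit d).
Proof. by apply/ffunP=> j; rewrite !ffunE. Qed.
Lemma dlast_comp n m p (f : Bmor m p) (d : Bmor n.+1 m) : dlast (Bcomp f d) = bext f (dlast d).
Proof. by rewrite /dlast ffunE. Qed.
Lemma dsnoc_comp n m p (f : Bmor m p) (d : Bmor n m) t :
  Bcomp f (dsnoc d t) = dsnoc (Bcomp f d) (bext f t).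
Proof. by apply/ffunP=> i; rewrite !ffunE; case: unlift => [j|]; rewrite ?ffunE. Qed.

Lemma in_oboxP n e m (d : Bmor n.+1 m) :
  in_obox e d = [exists i : 'I_n.+1, exists dd : bool, ((i, dd) != (ord0, e)) && (d i == inl dd)].
Proof.
apply/idP/idP.
- case/existsP=> i /existsP [dd /andP [H /existsP [c' /eqP Hc]]].
  apply/existsP; exists i; apply/existsP; exists dd; rewrite H /= Hc /= !ffunE.
  by rewrite unlift_none.
- case/existsP=> i /existsP [dd /andP [H /eqP Hd]].
  apply/existsP; exists i; apply/existsP; exists dd; rewrite H /=.
  apply/existsP; exists [ffun j => d (lift i j)]; apply/eqP/ffunP=> j /=.
  by rewrite !ffunE; case: unliftP => [j' ->|->] /=; rewrite ?ffunE.
Qed.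

Lemma lift_max_ord0 n (i : 'I_n.+1) : (lift ord_max i == ord0 :> 'I_n.+2) = (i == ord0).
Proof.
by rewrite -!val_eqE /= /bump leqNgt ltnS (leq_ord i) add0n.
Qed.

Lemma box_snoc n e m (d : Bmor n.+1 m) t : in_obox e d -> in_obox e (dsnoc d t).
Proof.
rewrite !in_oboxP => /existsP [i /existsP [dd /andP [H /eqP Hd]]].
apply/existsP; exists (lift ord_max i); apply/existsP; exists dd.
rewrite ffunE liftK Hd eqxx andbT.
move: H; rewrite !xpair_eqE lift_max_ord0 //.
Qed.

Lemma box_end n e m (d : Bmor n.+1 m) b : in_obox e (dsnoc d (inl b)).
Proof.
rewrite in_oboxP; apply/existsP; exists ord_max; apply/existsP; exists b.
rewrite ffunE unlift_none eqxx andbT xpair_eqE.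
by rewrite -val_eqE.
Qed.

Lemma box_split n e m (d : Bmor n.+2 m) :
  in_obox e d -> (exists b, dlast d = inl b) \/ in_obox e (dinit d).
Proof.
rewrite in_oboxP => /existsP [I /existsP [dd /andP [H /eqP Hd]]].
case: (unliftP ord_max I) Hd H => [i ->|->] Hd H.
- right; rewrite in_oboxP; apply/existsP; exists i; apply/existsP; exists dd.
  rewrite ffunE Hd eqxx andbT; move: H; by rewrite !xpair_eqE lift_max_ord0.
- by left; exists dd.
Qed.

Definition aend (A : cset) k n (a : hom (cprod (yon k.+1) (yon n.+1)) (cprod A A))
  (bb : bool) m (c : Bmor k.+1 m) (d : Bmor n.+1 m) : A m :=
  (if bb then snd else fst) (happ a m (c, d)).

Definition bpath (A : cset) k n e (b : hom (cprod (yon k.+1) (obox n e)) (cexp cI A))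
  m (c : Bmor k.+1 m) (x : obox n e m) (t : bpt m) : A m :=
  happ (happ b m (c, x)) m ((Bid m, [ffun _ : 'I_1 => t]) : cprod (yon m) cI m).

Definition Bfun (A : cset) k n e (a : hom (cprod (yon k.+1) (yon n.+1)) (cprod A A))
  (b : hom (cprod (yon k.+1) (obox n e)) (cexp cI A)) m
  (cd : cprod (yon k.+1) (obox n.+1 e) m) : A m :=
  let c : Bmor k.+1 m := cd.1 in let d : Bmor n.+2 m := sval cd.2 in
  match dlast d with
  | inl bb => aend a bb c (dinit d)
  | inr _ => match (insub (dinit d) : option {x : Bmor n.+1 m | in_obox e x}) with
             | Some x => bpath b c x (dlast d)
             | None => aend a false c (dinit d) end
  end.

Lemma square_end (A : cset) k n e a b (H : kan_square (path_ends A) (k:=k) (n:=n) (e:=e) a b)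
  m c (x : obox n e m) bb : bpath b c x (inl bb) = aend a bb c (sval x).
Proof.
have := H m (c, x); rewrite /= /aend /bpath => <- /=.
by case: bb.
Qed.

Lemma Bfun_end A k n e a b m (cd : cprod (yon k.+1) (obox n.+1 e) m) bb :
  dlast (sval cd.2) = inl bb ->
  @Bfun A k n e a b m cd = aend a bb cd.1 (dinit (sval cd.2)).
Proof. by rewrite /Bfun /= => ->. Qed.

Lemma Bfun_path A k n e a b (H : kan_square (path_ends A) (k:=k) (n:=n) (e:=e) a b)
  m (cd : cprod (yon k.+1) (obox n.+1 e) m) (x : obox n e m) :
  sval x = dinit (sval cd.2) ->
  @Bfun A k n e a b m cd = bpath b cd.1 x (dlast (sval cd.2)).
Proof.
move=> Hx; rewrite /Bfun /=.
case E: (dlast (sval cd.2)) => [bb|j].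
  by rewrite (square_end H) Hx.
case: insubP => [y Py Hy|Hn].
  by congr bpath; apply: val_inj; rewrite /= Hy Hx.
by case/negP: Hn; rewrite -Hx; apply: (svalP x).
Qed.

Lemma aend_nat A k n (a : hom (cprod (yon k.+1) (yon n.+1)) (cprod A A)) bb m m'
  (f : Bmor m m') c d :
  aend a bb (Bcomp f c) (Bcomp f d) = cact f (aend a bb c d).
Proof.
rewrite /aend; have := hnat a f (c, d); rewrite /= => ->.
by case: bb.
Qed.

Lemma bpath_nat A k n e (b : hom (cprod (yon k.+1) (obox n e)) (cexp cI A)) m m'
  (f : Bmor m m') c (x : obox n e m) t :
  bpath b (Bcomp f c) (cact f x) (bext f t) = cact f (bpath b c x t).
Proof.
rewrite /bpath; have := hnat b f (c, x); rewrite /= => ->.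
rewrite -(hnat (happ b m (c, x))) /=.
rewrite Bcomp_id_l Bcomp_id_r; congr happ; congr pair.
by apply/ffunP=> i; rewrite !ffunE.
Qed.

Definition mkB A k n e a b (H : kan_square (path_ends A) (k:=k) (n:=n) (e:=e) a b) :
  hom (cprod (yon k.+1) (obox n.+1 e)) A.
Proof.
refine (@Hom _ A (@Bfun A k n e a b) _).
move=> m m' f [c [d Hd]] /=.
case: (box_split Hd) => [[bb Hb]|Hi].
  rewrite (@Bfun_end _ _ _ _ _ _ _ _ bb) /=; last by rewrite dlast_comp Hb.
  rewrite (@Bfun_end _ _ _ _ _ _ _ _ bb) //= dinit_comp.
  exact: aend_nat.
rewrite (@Bfun_path _ _ _ _ _ _ H _ _ (exist _ (dinit d) Hi)) //.
rewrite (@Bfun_path _ _ _ _ _ _ H _ _ (cact f (exist _ (dinit d) Hi : obox n e m))) /=;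
  last by rewrite dinit_comp.
rewrite dlast_comp; exact: (bpath_nat b f c (exist _ (dinit d) Hi : obox n e m) (dlast d)).
Defined.

Definition Ginner A k n (F : hom (cprod (yon k.+1) (yon n.+2)) A) m
  (c : Bmor k.+1 m) (d : Bmor n.+1 m) : hom (cprod (yon m) cI) A.
Proof.
refine (@Hom (cprod (yon m) cI) A
  (fun p gt => happ F p ((Bcomp gt.1 c, dsnoc (Bcomp gt.1 d) (gt.2 ord0))
                          : cprod (yon k.+1) (yon n.+2) p)) _).
move=> p q f [g t] /=.
rewrite -(hnat F f) /= dsnoc_comp !Bcomp_assoc ffunE.
by [].
Defined.

Definition Gouter A k n (F : hom (cprod (yon k.+1) (yon n.+2)) A) :
  hom (cprod (yon k.+1) (yon n.+1)) (cexp cI A).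
Proof.
refine (@Hom (cprod (yon k.+1) (yon n.+1)) (cexp cI A) (fun m (cd : cprod (yon k.+1) (yon n.+1) m) => Ginner F cd.1 cd.2) _).
move=> m m' f [c d]; apply: hom_ext => p [g t] /=.
by rewrite !Bcomp_assoc.
Defined.

Lemma Hsq A k n e a b (H : kan_square (path_ends A) (k:=k) (n:=n) (e:=e) a b) :
  kan_square (to_one A) (n:=n.+1) (e:=e) (k:=k) (to_one _) (mkB H).
Proof. by []. Qed.

Lemma kfill_congr Y X (f : hom Y X) (u : ukf_struct f) n e k a1 a2 b1 b2
  (H1 : kan_square f (n:=n) (e:=e) (k:=k) a1 b1)
  (H2 : kan_square f (n:=n) (e:=e) (k:=k) a2 b2) :
  a1 = a2 -> b1 = b2 -> kfill u H1 = kfill u H2.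
Proof. move=> E1 E2; subst; f_equal; apply: proof_irrelevance. Qed.

Theorem lemma3p5 (A : cset) (HA : ukan_complex A) : ukf_struct (path_ends A).
Proof.
refine (@UKF _ _ _ (fun n e k a b H => Gouter (kfill HA (Hsq H))) _ _ _).
- move=> n e k a b H m [c x]; apply: hom_ext => p [g t] /=.
  have Hb := box_snoc (t ord0) (in_obox_act g (svalP x)).
  have := kfill_box HA (Hsq H) ((Bcomp g c, exist (fun z : Bmor n.+2 p => in_obox e z) _ Hb) : cprod (yon k.+1) (obox n.+1 e) p).
  rewrite /= => ->.
  rewrite (@Bfun_path _ _ _ _ _ _ H _ _ (cact g x)) /=; last by rewrite dinit_snoc.
  rewrite dlast_snoc /bpath.
  have := hnat b g (c, x); rewrite /= => ->.
  rewrite /= Bcomp_id_l; congr happ; congr pair.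
  by apply/ffunP=> i; rewrite ffunE (ord1 i).
- move=> n e k a b H m [c d] /=.
  rewrite !ffunE !Bcomp_id_l.
  have E bb := kfill_box HA (Hsq H) ((c, exist (fun z : Bmor n.+2 m => in_obox e z) _ (box_end e d bb)) : cprod (yon k.+1) (obox n.+1 e) m).
  rewrite /= in E; rewrite !E.
  rewrite /Bfun /= !dlast_snoc /= !dinit_snoc /aend /=.
  by rewrite -surjective_pairing.
- move=> n e k j alpha a b H H' m [c d]; apply: hom_ext => p [g t] /=.
  have := hnat alpha g c; rewrite /= => <-.
  have H2 : kan_square (to_one A) (n:=n.+1) (e:=e) (k:=j)
     (hcomp (to_one _) (hprodmap alpha (hid (yon n.+2))))
     (hcomp (mkB H) (hprodmap alpha (hid (obox n.+1 e)))) by [].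
  have := kfill_unif HA (Hsq H) H2 ((Bcomp g c, dsnoc (Bcomp g d) (t ord0)) : cprod (yon j.+1) (yon n.+2) p).
  rewrite /= => ->.
  rewrite (kfill_congr HA H2 (Hsq H')) //.
  + by apply: hom_ext.
  + by apply: hom_ext.
Qed.
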